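(* Let $R$ be a finite local Frobenius ring which is not a field, with a fixed primitive additive character $\psi$, and let $\tau$ be any multiplicative character of $R$. Then $$\sum_{a\in R^\times}|K_\tau(a)|^2=\begin{cases}|R|\,|R^\times| & \text{if }\tau\text{ is non-primitive},\\ 2|R|\,|R^\times|-|R|^2 & \text{if }\tau\text{ is primitive}.\end{cases}$$
   Context: All rings are finite and commutative with identity; $R^\times$ is the unit group; $M$ is the maximal ideal. An additive character $(R,+)\to\mathbb{C}^*$ is primitive if the only ideal on which it is identically $1$ is $(0)$; $R$ is Frobenius if such a character exists. A multiplicative character is a homomorphism $R^\times\to\mathbb{C}^*$; its conductor is $R$ if it is trivial, and otherwise the largest ideal $I\subseteq M$ such that it is identically $1$ on $1+I$; it is primitive if its conductor is $(0)$. $K_\tau(a)=\sum_{u\in R^\times}\tau(u)\psi(u+au^{-1})$. *)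

(* Defs.v *)
From HB Require Import structures.
From mathcomp Require Import all_boot all_order all_algebra all_field.
Set Implicit Arguments. Unset Strict Implicit. Unset Printing Implicit Defensive.
Import GRing.Theory Num.Theory.
Local Open Scope ring_scope.

Section Defs.
Variable R : finComUnitRingType.

Definition is_ideal (I : {set R}) : Prop :=
  [/\ 0 \in I, (forall x y, x \in I -> y \in I -> x + y \in I)
    & (forall r x, x \in I -> r * x \in I)].

Definition is_maximal_ideal (M : {set R}) : Prop :=
  [/\ is_ideal M, M != [set: R]
    & forall J, is_ideal J -> M \subset J -> J = M \/ J = [set: R]].

Definition is_local_ring : Prop :=
  exists M, is_maximal_ideal M /\ forall N, is_maximal_ideal N -> N = M.

Definition is_field_ring : Prop := forall x : R, x != 0 -> x \is a GRing.unit.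

Definition additive_character (psi : R -> algC) : Prop :=
  (forall x, psi x != 0) /\ (forall x y, psi (x + y) = psi x * psi y).

Definition primitive_additive (psi : R -> algC) : Prop :=
  forall I, is_ideal I -> (forall x, x \in I -> psi x = 1) -> I = [set 0].

Definition mult_character (tau : {unit R} -> algC) : Prop :=
  (forall u, tau u != 0) /\ (forall u v, tau (u * v)%g = tau u * tau v).

Definition trivial_mult (tau : {unit R} -> algC) : Prop := forall u, tau u = 1.

Definition trivial_on_1plus (tau : {unit R} -> algC) (I : {set R}) : Prop :=
  forall u : {unit R}, val u - 1 \in I -> tau u = 1.

Definition is_conductor (M : {set R}) (tau : {unit R} -> algC) (I : {set R}) : Prop :=
  (trivial_mult tau /\ I = [set: R]) \/
  (~ trivial_mult tau /\ [/\ is_ideal I, I \subset M, trivial_on_1plus tau I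
         & forall J, is_ideal J -> J \subset M -> trivial_on_1plus tau J -> J \subset I]).

Definition primitive_mult (M : {set R}) (tau : {unit R} -> algC) : Prop :=
  is_conductor M tau [set 0].

Definition kloosterman (psi : R -> algC) (tau : {unit R} -> algC) (a : R) : algC :=
  \sum_(u : {unit R}) tau u * psi (val u + a * (val u)^-1).

End Defs.

(* Main.v *)
Require Import Defs.
From HB Require Import structures.
From mathcomp Require Import all_boot all_order all_algebra all_field.
From mathcomp Require Import ring.
Import GRing.Theory Num.Theory.
Set Implicit Arguments. Unset Strict Implicit. Unset Printing Implicit Defensive.
Local Open Scope ring_scope.

Lemma root1_conj (z : algC) (n : nat) : (0 < n)%N -> z ^+ n = 1 -> z^* = z^-1.
Proof.
move=> n0 hz.
have h1 : `|z| = 1.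
  apply/eqP; rewrite -(pexpr_eq1 n0) ?normr_ge0 // -normrX hz normr1 //.
by rewrite invC_norm h1 expr1n invr1 mul1r.
Qed.

Lemma psi0 (R : finComUnitRingType) (psi : R -> algC) :
  additive_character psi -> psi 0 = 1.
Proof.
move=> [nz hD]; have := hD 0 0; rewrite addr0 => h.
apply: (mulfI (nz 0)); by rewrite mulr1 -h.
Qed.

Lemma psiN (R : finComUnitRingType) (psi : R -> algC) (x : R) :
  additive_character psi -> psi (- x) = (psi x)^-1.
Proof.
move=> hp; have [nz hD] := hp.
apply: (mulfI (nz x)); rewrite -hD subrr (psi0 hp) divff //.
Qed.

Lemma psi_conj (R : finComUnitRingType) (psi : R -> algC) (x : R) :
  additive_character psi -> (psi x)^* = psi (- x).
Proof.
move=> hp; have [nz hD] := hp.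
rewrite (psiN _ hp); apply: (@root1_conj _ #|R|); first by apply/card_gt0P; exists 0.
have hP : \prod_(y : R) psi y = \prod_(y : R) psi (x + y).
  exact: (reindex_inj (addrI x)).
have : \prod_(y : R) psi y = psi x ^+ #|R| * \prod_(y : R) psi y.
  by rewrite {1}hP -prodr_const -big_split /=; apply: eq_bigr => y _; rewrite hD.
have nzP : \prod_(y : R) psi y != 0 by apply/prodf_neq0 => y _; exact: nz.
move=> h; apply: (mulIf nzP); by rewrite mul1r -h.
Qed.

Lemma tau1 (R : finComUnitRingType) (tau : {unit R} -> algC) :
  mult_character tau -> tau 1%g = 1.
Proof.
move=> [nz hM]; have := hM 1%g 1%g; rewrite mulg1 => h.
apply: (mulfI (nz 1%g)); by rewrite mulr1 -h.
Qed.

Lemma tau_conj (R : finComUnitRingType) (tau : {unit R} -> algC) (u : {unit R}) :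
  mult_character tau -> (tau u)^* = (tau u)^-1.
Proof.
move=> ht; have [nz hM] := ht.
apply: (@root1_conj _ #|{: {unit R}}|); first by apply/card_gt0P; exists 1%g.
have hP : \prod_(y : {unit R}) tau y = \prod_(y : {unit R}) tau (u * y)%g.
  exact: (reindex_inj (mulgI u)).
have : \prod_(y : {unit R}) tau y = tau u ^+ #|{: {unit R}}| * \prod_(y : {unit R}) tau y.
  by rewrite {1}hP -prodr_const -big_split /=; apply: eq_bigr => y _; rewrite hM.
have nzP : \prod_(y : {unit R}) tau y != 0 by apply/prodf_neq0 => y _; exact: nz.
move=> h; apply: (mulIf nzP); by rewrite mul1r -h.
Qed.

Lemma ideal_opp (R : finComUnitRingType) (I : {set R}) x :
  is_ideal I -> x \in I -> - x \in I.
Proof. by move=> [_ _ hm] hx; rewrite -mulN1r; apply: hm. Qed.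

Lemma char_sum (R : finComUnitRingType) (I : {set R}) (f : R -> algC) :
  is_ideal I -> (forall x y, x \in I -> y \in I -> f (x + y) = f x * f y) ->
  \sum_(x in I) f x = if [forall x in I, f x == 1] then #|I|%:R else 0.
Proof.
move=> hI hf; case: ifP => [/forall_inP H | /negbT/forall_inPn [h hh fh]].
  by rewrite (eq_bigr (fun _ => 1)) ?sumr_const // => x /H/eqP.
have hI' := hI; case: hI' => [h0 hD hm].
set S := \sum_(x in I) f x.
have : S = f h * S.
  have e : forall x, (h + x \in I) = (x \in I).
    move=> x; apply/idP/idP => hx; last exact: hD.
    by rewrite -(addKr h x); apply: hD => //; apply: ideal_opp.
  rewrite {1}/S (reindex_inj (addrI h)) /= (eq_bigl (fun x => x \in I)) => [|x]; last by rewrite /= e.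
  by rewrite /S mulr_sumr; apply: eq_bigr => x hx; rewrite hf.
move/eqP; rewrite -subr_eq0 -{1}(mul1r S) -mulrBl mulf_eq0 subr_eq0 eq_sym.
by rewrite (negbTE fh) => /eqP.
Qed.
Definition ann (R : finComUnitRingType) (I : {set R}) : {set R} :=
  [set x | [forall m in I, x * m == 0]].
Definition mulset (R : finComUnitRingType) (c : R) (I : {set R}) : {set R} :=
  [set c * m | m in I].

Lemma annP (R : finComUnitRingType) (I : {set R}) x :
  reflect (forall m, m \in I -> x * m = 0) (x \in ann I).
Proof.
rewrite inE; apply: (iffP forall_inP) => H m hm; first exact/eqP/H.
by apply/eqP/H.
Qed.

Lemma ann_ideal (R : finComUnitRingType) (I : {set R}) : is_ideal (ann I).
Proof.
split.
- by apply/annP => m _; rewrite mul0r.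
- move=> x y /annP hx /annP hy; apply/annP => m hm; by rewrite mulrDl hx ?hy ?addr0.
- move=> r x /annP hx; apply/annP => m hm; by rewrite -mulrA hx ?mulr0.
Qed.

Lemma mulset_ideal (R : finComUnitRingType) (c : R) (I : {set R}) :
  is_ideal I -> is_ideal (mulset c I).
Proof.
move=> [h0 hD hm]; split.
- by apply/imsetP; exists 0 => //; rewrite mulr0.
- move=> x y /imsetP [a ha ->] /imsetP [b hb ->]; apply/imsetP; exists (a + b).
    exact: hD.
  by rewrite mulrDr.
- move=> r x /imsetP [a ha ->]; apply/imsetP; exists (r * a); first exact: hm.
  by rewrite mulrCA.
Qed.

Lemma setT_ideal (R : finComUnitRingType) : is_ideal [set: R].
Proof. by split=> *; rewrite inE. Qed.

Lemma psi_sum (R : finComUnitRingType) (psi : R -> algC) (I : {set R}) (c : R) :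
  additive_character psi -> primitive_additive psi -> is_ideal I ->
  \sum_(x in I) psi (c * x) = if c \in ann I then #|I|%:R else 0.
Proof.
move=> hp hpr hI; have [nz hD] := hp.
rewrite (char_sum hI) => [|x y _ _]; last by rewrite mulrDr hD.
congr (if _ then _ else _); apply/forall_inP/annP.
- move=> H m hm.
  have e : mulset c I = [set 0].
    apply: hpr; first exact: mulset_ideal.
    by move=> x /imsetP [a ha ->]; apply/eqP/H.
  have : c * m \in mulset c I by apply/imsetP; exists m.
  by rewrite e inE => /eqP.
- by move=> H x hx; rewrite H // psi0.
Qed.

Lemma annT (R : finComUnitRingType) (c : R) : (c \in ann [set: R]) = (c == 0).
Proof.
apply/annP/eqP => [H | ->]; first by rewrite -(mulr1 c) H ?inE.
by move=> m _; rewrite mul0r.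
Qed.

Lemma ann_card (R : finComUnitRingType) (psi : R -> algC) (I : {set R}) :
  additive_character psi -> primitive_additive psi -> is_ideal I ->
  (#|I| * #|ann I| = #|R|)%N.
Proof.
move=> hp hpr hI.
have e1 : \sum_(x : R) \sum_(i in I) psi (x * i) = (#|I| * #|ann I|)%:R :> algC.
  under eq_bigr => x _ do rewrite (psi_sum _ hp hpr hI).
  rewrite -big_mkcond /= sumr_const natrM mulr_natr.
  by rewrite (eq_card (fun x => erefl (x \in ann I))).
have e2 : \sum_(x : R) \sum_(i in I) psi (x * i) = #|R|%:R :> algC.
  rewrite exchange_big /=.
  under eq_bigr => i _.
    rewrite (eq_bigr (fun x => psi (i * x))); last by move=> x _; rewrite mulrC.
    rewrite (eq_bigl (fun x => x \in [set: R])); last by move=> x; rewrite inE.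
    rewrite (psi_sum _ hp hpr (@setT_ideal R)) annT cardsT.
  over.
  have h0 : 0 \in I by have [] := hI.
  rewrite (bigD1 0) //= eqxx big1 ?addr0 // => i /andP [_ /negbTE ->] //.
by apply/eqP; rewrite -(eqr_nat algC) -e1 -e2.
Qed.
Definition idealb (R : finComUnitRingType) (I : {set R}) : bool :=
  [&& 0 \in I, [forall x in I, [forall y in I, x + y \in I]]
    & [forall r, [forall x in I, r * x \in I]]].

Lemma idealP (R : finComUnitRingType) (I : {set R}) : reflect (is_ideal I) (idealb I).
Proof.
apply: (iffP and3P) => [[h0 /forall_inP hD /forallP hm] | [h0 hD hm]]; split => //.
- by move=> x y hx hy; move/forall_inP: (hD x hx) => H; exact: H.
- by move=> r x hx; move/forall_inP: (hm r) => H; exact: H.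
- by apply/forall_inP => x hx; apply/forall_inP => y hy; exact: hD.
- by apply/forallP => r; apply/forall_inP => x hx; exact: hm.
Qed.

Lemma one_in_ideal (R : finComUnitRingType) (J : {set R}) :
  is_ideal J -> 1 \in J -> J = [set: R].
Proof.
move=> [_ _ hm] h1; apply/setP => x; rewrite inE -(mulr1 x); exact: hm.
Qed.

Lemma proper_sub_M (R : finComUnitRingType) (M : {set R})
  (hloc : forall N, is_maximal_ideal N -> N = M) (J : {set R}) :
  is_ideal J -> 1 \notin J -> J \subset M.
Proof.
move=> hJ h1.
pose P := fun N : {set R} => [&& idealb N, J \subset N & 1 \notin N].
have PJ : P J by rewrite /P subxx h1 !andbT; exact/idealP.
case: (@arg_maxnP _ J P (fun N => #|N|) PJ) => N /and3P [/idealP hN sJN h1N] hmax.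
suff : is_maximal_ideal N by move/hloc => <-.
split => //.
  by apply/eqP => e; move: h1N; rewrite e inE.
move=> J' hJ' sNJ'.
case: (boolP (1 \in J')) => h1'; first by right; exact: one_in_ideal.
left; apply/eqP; rewrite eq_sym eqEcard sNJ' /=.
apply: hmax; rewrite /P h1' andbT (subset_trans sJN sNJ') andbT; exact/idealP.
Qed.

Lemma M_ideal (R : finComUnitRingType) (M : {set R}) :
  is_maximal_ideal M -> is_ideal M.
Proof. by case. Qed.

Lemma one_notin_M (R : finComUnitRingType) (M : {set R}) :
  is_maximal_ideal M -> 1 \notin M.
Proof. by move=> [hI hne _]; apply/negP => /(one_in_ideal hI) e; rewrite e eqxx in hne. Qed.

Lemma inM_unit (R : finComUnitRingType) (M : {set R})
  (hM : is_maximal_ideal M) (hloc : forall N, is_maximal_ideal N -> N = M) (x : R) :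
  (x \in M) = ~~ (x \is a GRing.unit).
Proof.
apply/idP/idP.
  move=> xM; apply/negP => ux; have := one_notin_M hM; rewrite -(mulVr ux).
  by have [_ _ hm] := M_ideal hM; rewrite hm.
move=> nux.
have hJ := mulset_ideal x (@setT_ideal R).
have sJ : mulset x [set: R] \subset M.
  apply: (proper_sub_M hloc hJ); apply/negP => /imsetP [r _ e].
  move/negP: nux; apply; apply/unitrP; exists r; by rewrite mulrC -e.
apply: (subsetP sJ); apply/imsetP; exists 1; by rewrite ?inE ?mulr1.
Qed.
Lemma ann_anti (R : finComUnitRingType) (I J : {set R}) :
  I \subset J -> ann J \subset ann I.
Proof. by move=> sIJ; apply/subsetP => x /annP H; apply/annP => m /(subsetP sIJ)/H. Qed.

Lemma sub_annann (R : finComUnitRingType) (J : {set R}) : J \subset ann (ann J).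
Proof. by apply/subsetP => j hj; apply/annP => x /annP H; rewrite mulrC H. Qed.

Lemma A_sub_M (R : finComUnitRingType) (M : {set R})
  (hM : is_maximal_ideal M) (hloc : forall N, is_maximal_ideal N -> N = M)
  (hnf : ~ is_field_ring R) : ann M \subset M.
Proof.
apply/subsetP => a ha; rewrite (inM_unit hM hloc); apply/negP => ua.
apply: hnf => x nx; apply/negPn/negP => nux.
move: nx; rewrite -(inM_unit hM hloc) in nux.
by move/annP: ha => /(_ x nux) e; rewrite -(mulKr ua x) e mulr0 eqxx.
Qed.

Lemma cardM_lt (R : finComUnitRingType) (M : {set R}) :
  is_maximal_ideal M -> (#|M| < #|R|)%N.
Proof.
move=> hM; rewrite -cardsT; apply: proper_card; rewrite properT.
by apply/eqP => e; have := one_notin_M hM; rewrite e inE.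
Qed.

Lemma A_ne0 (R : finComUnitRingType) (M : {set R}) (psi : R -> algC)
  (hM : is_maximal_ideal M) (hpsi : additive_character psi) (hprim : primitive_additive psi) :
  ann M != [set 0].
Proof.
apply/eqP => e; have := ann_card hpsi hprim (M_ideal hM); rewrite e cards1 muln1.
by move=> h; have := cardM_lt hM; rewrite h ltnn.
Qed.

Lemma A_sub_J (R : finComUnitRingType) (M : {set R}) (psi : R -> algC)
  (hM : is_maximal_ideal M) (hloc : forall N, is_maximal_ideal N -> N = M)
  (hpsi : additive_character psi) (hprim : primitive_additive psi) (J : {set R}) :
  is_ideal J -> J != [set 0] -> ann M \subset J.
Proof.
move=> hJ nJ.
have sM : ann J \subset M.
  apply: (proper_sub_M hloc (ann_ideal J)); apply/negP => /annP H.
  move/eqP: nJ; apply; apply/setP => x; rewrite inE; apply/idP/eqP.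
    by move/H; rewrite mul1r.
  by move=> ->; have [] := hJ.
have e : ann (ann J) = J.
  apply/eqP; rewrite eq_sym eqEcard sub_annann /=.
  have c1 := ann_card hpsi hprim hJ.
  have c2 := ann_card hpsi hprim (ann_ideal J).
  have pos : (0 < #|ann J|)%N by apply/card_gt0P; exists 0; have [] := ann_ideal J.
  rewrite -c1 in c2; move/eqP: c2; rewrite [X in _ == X]mulnC eqn_pmul2l // => /eqP ->.
  by [].
by rewrite -e; apply: ann_anti.
Qed.
Definition Tt (R : finComUnitRingType) (tau : {unit R} -> algC) (x : R) : algC :=
  tau (insubd (1%g : {unit R}) x).

Lemma Tt_val (R : finComUnitRingType) (tau : {unit R} -> algC) (u : {unit R}) :
  Tt tau (val u) = tau u.
Proof. by rewrite /Tt valKd. Qed.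

Lemma Tt_mul (R : finComUnitRingType) (tau : {unit R} -> algC) (x y : R) :
  mult_character tau -> x \is a GRing.unit -> y \is a GRing.unit ->
  Tt tau (x * y) = Tt tau x * Tt tau y.
Proof.
move=> [_ hM] ux uy; rewrite /Tt -hM; congr tau; apply: val_inj.
by rewrite FinRing.val_unitM !val_insubd unitrM ux uy.
Qed.

Lemma Tt_nz (R : finComUnitRingType) (tau : {unit R} -> algC) (x : R) :
  mult_character tau -> Tt tau x != 0.
Proof. by move=> [nz _]; exact: nz. Qed.

Lemma Tt_conj (R : finComUnitRingType) (tau : {unit R} -> algC) (x : R) :
  mult_character tau -> (Tt tau x)^* = (Tt tau x)^-1.
Proof. by move=> ht; exact: tau_conj. Qed.

Lemma Tt1 (R : finComUnitRingType) (tau : {unit R} -> algC) :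
  mult_character tau -> Tt tau 1 = 1.
Proof.
move=> ht; rewrite -(tau1 ht) /Tt; congr tau; apply: val_inj.
by rewrite val_insubd unitr1.
Qed.

Lemma sumU (R : finComUnitRingType) (F : R -> algC) :
  \sum_(u : {unit R}) F (val u) = \sum_(x : R | x \is a GRing.unit) F x.
Proof.
symmetry; rewrite (reindex (val : {unit R} -> R)) /=.
  by apply: eq_bigl => u; rewrite (valP u).
exists (insubd (1%g : {unit R})) => x hx; first by rewrite valKd.
by rewrite val_insubd (_ : x \is a GRing.unit = true).
Qed.

Definition Csum (R : finComUnitRingType) (psi : R -> algC) (c : R) : algC :=
  \sum_(a : R | a \is a GRing.unit) psi (c * a).

Lemma Csum_formula (R : finComUnitRingType) (M : {set R})
  (hM : is_maximal_ideal M) (hloc : forall N, is_maximal_ideal N -> N = M)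
  (psi : R -> algC) (hpsi : additive_character psi) (hprim : primitive_additive psi) (c : R) :
  Csum psi c = (c == 0)%:R * #|R|%:R - (c \in ann M)%:R * #|M|%:R.
Proof.
have eT := psi_sum c hpsi hprim (@setT_ideal R).
have eM := psi_sum c hpsi hprim (M_ideal hM).
rewrite annT cardsT in eT.
have e : \sum_(x in [set: R]) psi (c * x) = Csum psi c + \sum_(x in M) psi (c * x).
  rewrite (bigID (fun x => x \is a GRing.unit)) /=; congr (_ + _).
    by apply: eq_bigl => x; rewrite inE.
  by apply: eq_bigl => x; rewrite inE (inM_unit hM hloc).
have -> : Csum psi c = \sum_(x in [set: R]) psi (c * x) - \sum_(x in M) psi (c * x).
  by rewrite e addrK.
by rewrite eT eM; case: (c == 0); case: (c \in ann M); rewrite ?mul1r ?mul0r.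
Qed.

Lemma card_units (R : finComUnitRingType) (M : {set R})
  (hM : is_maximal_ideal M) (hloc : forall N, is_maximal_ideal N -> N = M) :
  #|R|%:R = #|M|%:R + #|{: {unit R}}|%:R :> algC.
Proof.
have e1 : \sum_(x : R) (1 : algC) = #|R|%:R by rewrite sumr_const.
have e2 : \sum_(x in M) (1 : algC) = #|M|%:R by rewrite sumr_const.
have e3 : \sum_(u : {unit R}) (1 : algC) = #|{: {unit R}}|%:R by rewrite sumr_const.
rewrite -e1 -e2 -e3 (sumU (fun _ => 1)) (bigID (fun x => x \is a GRing.unit)) /= addrC.
by congr (_ + _); apply: eq_bigl => x; rewrite (inM_unit hM hloc).
Qed.
Lemma K_expand (R : finComUnitRingType)
  (psi : R -> algC) (hpsi : additive_character psi)
  (tau : {unit R} -> algC) (htau : mult_character tau) :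
  \sum_(a : {unit R}) `|kloosterman psi tau (val a)| ^+ 2 =
  \sum_(x : R | x \is a GRing.unit) \sum_(y : R | y \is a GRing.unit)
     Tt tau x * (Tt tau y)^-1 * psi (x - y) * Csum psi (x^-1 - y^-1).
Proof.
have [nz hD] := hpsi.
rewrite (sumU (fun a => `|kloosterman psi tau a| ^+ 2)).
have hK : forall a, kloosterman psi tau a =
    \sum_(x : R | x \is a GRing.unit) Tt tau x * psi (x + a * x^-1).
  move=> a; rewrite /kloosterman -(sumU (fun x => Tt tau x * psi (x + a * x^-1))).
  by apply: eq_bigr => u _; rewrite Tt_val.
have hKc : forall a, (kloosterman psi tau a)^* =
    \sum_(y : R | y \is a GRing.unit) (Tt tau y)^-1 * psi (- (y + a * y^-1)).
  move=> a; rewrite hK rmorph_sum; apply: eq_bigr => y _.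
  by rewrite rmorphM /= Tt_conj // psi_conj.
under eq_bigr => a _ do rewrite normCK hKc hK big_distrlr /=.
rewrite exchange_big; apply: eq_bigr => x ux; rewrite exchange_big.
apply: eq_bigr => y uy; rewrite /Csum mulr_sumr; apply: eq_bigr => a ua.
rewrite mulrACA -hD -[RHS]mulrA -hD; congr (_ * psi _); ring.
Qed.
Lemma first_part (R : finComUnitRingType)
  (psi : R -> algC) (hpsi : additive_character psi)
  (tau : {unit R} -> algC) (htau : mult_character tau) :
  \sum_(x : R | x \is a GRing.unit) \sum_(y : R | y \is a GRing.unit)
     (x^-1 - y^-1 == 0)%:R * (Tt tau x * (Tt tau y)^-1 * psi (x - y)) =
  #|{: {unit R}}|%:R.
Proof.
rewrite -[RHS](sumr_const _ (1 : algC)) (sumU (fun _ => 1)).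
apply: eq_bigr => x ux.
rewrite (bigD1 x) //= subrr eqxx mul1r big1 ?addr0.
  by rewrite divff ?Tt_nz // subrr (psi0 hpsi) mulr1.
move=> y /andP [uy nyx].
by rewrite subr_eq0 (inj_eq invr_inj) eq_sym (negbTE nyx) mul0r.
Qed.

Lemma second_part (R : finComUnitRingType) (M : {set R})
  (hM : is_maximal_ideal M) (hloc : forall N, is_maximal_ideal N -> N = M)
  (hnf : ~ is_field_ring R)
  (psi : R -> algC) (hpsi : additive_character psi) (hprim : primitive_additive psi)
  (tau : {unit R} -> algC) (htau : mult_character tau) :
  \sum_(x : R | x \is a GRing.unit) \sum_(y : R | y \is a GRing.unit)
     (x^-1 - y^-1 \in ann M)%:R * (Tt tau x * (Tt tau y)^-1 * psi (x - y)) =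
  #|R|%:R - #|M|%:R * \sum_(s in ann M) (Tt tau (1 + s))^-1.
Proof.
have hA := ann_ideal M; have [hA0 hAD hAm] := hA.
have sAM := A_sub_M hM hloc hnf.
pose f w := (w - 1 \in ann M)%:R * (Tt tau w)^-1 : algC.
have step1 : forall x, x \is a GRing.unit ->
    \sum_(y : R | y \is a GRing.unit)
     (x^-1 - y^-1 \in ann M)%:R * (Tt tau x * (Tt tau y)^-1 * psi (x - y)) =
    \sum_(w : R | w \is a GRing.unit) f w * psi ((1 - w) * x).
  move=> x ux; rewrite (reindex_inj (mulrI ux)) /=.
  rewrite (eq_bigl (fun w => w \is a GRing.unit)) => [|w]; last by rewrite /= unitrMr.
  apply: eq_bigr => w uw; rewrite /f.
  have e1 : (x^-1 - (x * w)^-1 \in ann M) = (w - 1 \in ann M).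
    have id1 : x^-1 - (x * w)^-1 = x^-1 * w^-1 * (w - 1).
      rewrite invrM // mulrBr mulr1 -[x^-1 * w^-1 * w]mulrA mulVr // mulr1.
      by rewrite mulrC.
    have id2 : w - 1 = x * w * (x^-1 - (x * w)^-1).
      by rewrite mulrBr divrr ?unitrM ?ux // mulrAC divrr // mul1r.
    apply/idP/idP => h; first by rewrite id2; exact: hAm.
    by rewrite id1; exact: hAm.
  rewrite e1 (Tt_mul htau ux uw) invfM mulVKf ?Tt_nz //.
  rewrite -mulrA; congr (_ * (_ * psi _)); ring.
under eq_bigr => x ux do rewrite step1 //.
rewrite exchange_big /=.
have step2 : forall w, w \is a GRing.unit ->
   \sum_(x : R | x \is a GRing.unit) f w * psi ((1 - w) * x) =
   f w * ((w == 1)%:R * #|R|%:R - #|M|%:R).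
  move=> w uw; rewrite -mulr_sumr -/(Csum psi (1 - w)).
  rewrite (Csum_formula hM hloc hpsi hprim) /f.
  case: (boolP (w - 1 \in ann M)) => h; last by rewrite !mul0r.
  have -> : (1 - w \in ann M) by rewrite -opprB; exact: ideal_opp.
  by rewrite subr_eq0 eq_sym; congr (_ * (_ - _)); rewrite mul1r.
under eq_bigr => w uw do rewrite step2 // mulrBr.
rewrite sumrB (bigD1 1) ?unitr1 //= eqxx mul1r big1 ?addr0; last first.
  by move=> w /andP [_ /negbTE ->]; rewrite mul0r mulr0.
rewrite /f subrr hA0 mul1r (Tt1 htau) invr1 mul1r.
congr (_ - _); rewrite -mulr_suml mulrC; congr (_ * _).
rewrite (eq_bigr (fun i => if i - 1 \in ann M then (Tt tau i)^-1 else 0)); last first.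
  by move=> i _; case: (i - 1 \in ann M); rewrite ?mul1r ?mul0r.
rewrite -big_mkcondr (reindex_inj (addrI 1)) /=.
apply: eq_bigl => s; rewrite (addrC 1 s) addrK.
case: (boolP (s \in ann M)) => hs; rewrite ?andbF ?andbT //.
apply/negPn; rewrite -(inM_unit hM hloc); apply/negP => h.
have := one_notin_M hM; have [_ hD hm] := M_ideal hM.
rewrite -(addKr s 1) => /negP; apply; apply: hD => //.
rewrite -mulN1r; apply: hm; exact: (subsetP sAM).
Qed.
Lemma unit_1A (R : finComUnitRingType) (M : {set R})
  (hM : is_maximal_ideal M) (hloc : forall N, is_maximal_ideal N -> N = M)
  (hnf : ~ is_field_ring R) (s : R) :
  s \in ann M -> 1 + s \is a GRing.unit.
Proof.
move=> hs; apply/negPn; rewrite -(inM_unit hM hloc); apply/negP => h.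
have := one_notin_M hM; have [_ hD hm] := M_ideal hM.
rewrite -(addrK s 1) => /negP; apply; apply: hD => //.
rewrite -mulN1r; apply: hm; exact: (subsetP (A_sub_M hM hloc hnf)).
Qed.

Lemma A_sum (R : finComUnitRingType) (M : {set R})
  (hM : is_maximal_ideal M) (hloc : forall N, is_maximal_ideal N -> N = M)
  (hnf : ~ is_field_ring R)
  (tau : {unit R} -> algC) (htau : mult_character tau) :
  \sum_(s in ann M) (Tt tau (1 + s))^-1 =
  if [forall s in ann M, Tt tau (1 + s) == 1] then #|ann M|%:R else 0.
Proof.
rewrite (char_sum (ann_ideal M)) => [|s t hs ht].
  congr (if _ then _ else _); apply/forall_inP/forall_inP => H s hs.
    by rewrite -invr_eq1 H.
  by rewrite invr_eq1 H.
have e : 1 + (s + t) = (1 + s) * (1 + t).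
  have st : s * t = 0 by move/annP: hs; apply; exact: (subsetP (A_sub_M hM hloc hnf)).
  by rewrite mulrDr mulr1 mulrDl mul1r st addr0 addrA.
rewrite e (Tt_mul htau) ?(unit_1A hM hloc hnf) // invfM.
by [].
Qed.

Lemma trivon_A (R : finComUnitRingType) (M : {set R})
  (hM : is_maximal_ideal M) (hloc : forall N, is_maximal_ideal N -> N = M)
  (hnf : ~ is_field_ring R)
  (tau : {unit R} -> algC) (J : {set R}) :
  ann M \subset J -> trivial_on_1plus tau J ->
  [forall s in ann M, Tt tau (1 + s) == 1].
Proof.
move=> sAJ ht; apply/forall_inP => s hs; apply/eqP; rewrite /Tt; apply: ht.
by rewrite val_insubd (unit_1A hM hloc hnf hs) /= addrAC subrr add0r (subsetP sAJ).
Qed.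

Lemma A_trivon (R : finComUnitRingType) (M : {set R})
  (tau : {unit R} -> algC) :
  [forall s in ann M, Tt tau (1 + s) == 1] -> trivial_on_1plus tau (ann M).
Proof.
move/forall_inP => H u hu; have := H _ hu.
by rewrite addrC subrK Tt_val => /eqP.
Qed.

Lemma prim_ntriv (R : finComUnitRingType) (M : {set R})
  (hM : is_maximal_ideal M) (hloc : forall N, is_maximal_ideal N -> N = M)
  (hnf : ~ is_field_ring R)
  (psi : R -> algC) (hpsi : additive_character psi) (hprim : primitive_additive psi)
  (tau : {unit R} -> algC) :
  primitive_mult M tau -> ~~ [forall s in ann M, Tt tau (1 + s) == 1].
Proof.
case => [[_ e] | [_ [_ _ _ H]]].
  have : (1 : R) \in [set 0] by rewrite e inE.
  by rewrite inE oner_eq0.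
apply/negP => /A_trivon ht.
have := H _ (ann_ideal M) (A_sub_M hM hloc hnf) ht => s0.
have := A_ne0 hM hpsi hprim; rewrite eqEsubset s0 /= sub1set.
by have [->] := ann_ideal M.
Qed.

Lemma nonprim_triv (R : finComUnitRingType) (M : {set R})
  (hM : is_maximal_ideal M) (hloc : forall N, is_maximal_ideal N -> N = M)
  (hnf : ~ is_field_ring R)
  (psi : R -> algC) (hpsi : additive_character psi) (hprim : primitive_additive psi)
  (tau : {unit R} -> algC) (htau : mult_character tau) :
  ~ primitive_mult M tau -> [forall s in ann M, Tt tau (1 + s) == 1].
Proof.
move=> hnp; apply/idPn => nt; apply: hnp; right; split.
  by move=> htr; move/negP: nt; apply; apply/forall_inP => s _; rewrite /Tt htr.
split.
- split; first by rewrite inE.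
  + by move=> x y; rewrite !inE => /eqP -> /eqP ->; rewrite addr0.
  + by move=> r x; rewrite !inE => /eqP ->; rewrite mulr0.
- by rewrite sub1set; have [->] := M_ideal hM.
- move=> u; rewrite inE subr_eq0 => /eqP hu.
  have -> : u = 1%g by apply: val_inj; rewrite hu.
  exact: tau1.
- move=> J hJ sJM ht; case: (boolP (J \subset [set 0])) => // hn.
  have nJ : J != [set 0] by apply: contraNneq hn => ->.
  have := trivon_A hM hloc hnf (A_sub_J hM hloc hpsi hprim hJ nJ) ht.
  by rewrite (negbTE nt).
Qed.
Lemma S_formula (R : finComUnitRingType) (M : {set R})
  (hM : is_maximal_ideal M) (hloc : forall N, is_maximal_ideal N -> N = M)
  (hnf : ~ is_field_ring R)
  (psi : R -> algC) (hpsi : additive_character psi) (hprim : primitive_additive psi)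
  (tau : {unit R} -> algC) (htau : mult_character tau) :
  \sum_(a : {unit R}) `|kloosterman psi tau (val a)| ^+ 2 =
  #|R|%:R * #|{: {unit R}}|%:R -
  #|M|%:R * (#|R|%:R - #|M|%:R *
     (if [forall s in ann M, Tt tau (1 + s) == 1] then #|ann M|%:R else 0)).
Proof.
rewrite (K_expand hpsi htau) -(A_sum hM hloc hnf htau).
rewrite -(first_part hpsi htau) -(second_part hM hloc hnf hpsi hprim htau).
rewrite !mulr_sumr -sumrB; apply: eq_bigr => x ux.
rewrite !mulr_sumr -sumrB; apply: eq_bigr => y uy.
rewrite (Csum_formula hM hloc hpsi hprim); ring.
Qed.

Theorem mainTheorem7 (R : finComUnitRingType) (M : {set R})
  (hM : is_maximal_ideal M) (hloc : forall N, is_maximal_ideal N -> N = M)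
  (hnf : ~ is_field_ring R)
  (psi : R -> algC) (hpsi : additive_character psi) (hprim : primitive_additive psi)
  (tau : {unit R} -> algC) (htau : mult_character tau) :
  (~ primitive_mult M tau ->
    \sum_(a : {unit R}) `|kloosterman psi tau (val a)| ^+ 2 =
      #|R|%:R * #|{: {unit R}}|%:R) /\
  (primitive_mult M tau ->
    \sum_(a : {unit R}) `|kloosterman psi tau (val a)| ^+ 2 =
      2%:R * #|R|%:R * #|{: {unit R}}|%:R - (#|R|%:R) ^+ 2).
Proof.
rewrite (S_formula hM hloc hnf hpsi hprim htau); split.
  move=> hnp; rewrite (nonprim_triv hM hloc hnf hpsi hprim htau hnp).
  by rewrite -[#|M|%:R * #|ann M|%:R]natrM (ann_card hpsi hprim (M_ideal hM)) subrr mulr0 subr0.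
move=> hp; rewrite (negbTE (prim_ntriv hM hloc hnf hpsi hprim hp)).
rewrite !(card_units hM hloc); ring.
Qed.
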